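(* Let $R$ be a Dedekind domain and $I$ a non-principal ideal of $R$ such that $I\cong I^{-1}$ as $R$-modules. Let $A=M_2(R)$. Then ${}_A\mathrm{Hom}_R(A,I)\cong{}_AA$ as left $A$-modules.
   Context: The left $A$-module structure on $\mathrm{Hom}_R(A,I)$ is $(af)(x)=f(xa)$. *)

(* Defs.v *)
From HB Require Import structures.
From mathcomp Require Import all_boot all_order all_algebra.
From mathcomp Require Export fraction.
Set Implicit Arguments. Unset Strict Implicit. Unset Printing Implicit Defensive.
Import GRing.Theory.
Local Open Scope ring_scope.

Definition tofracR (R : idomainType) : R -> {fraction R} := @FracField.tofrac R.

Definition is_ideal (R : idomainType) (I : R -> Prop) : Prop :=
  I 0 /\ (forall x y, I x -> I y -> I (x + y)) /\ (forall r x, I x -> I (r * x)).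

Definition principal_ideal (R : idomainType) (I : R -> Prop) : Prop :=
  exists a : R, forall x, I x <-> exists r, x = r * a.

Definition fin_gen_ideal (R : idomainType) (I : R -> Prop) : Prop :=
  exists s : seq R, forall x,
    I x <-> exists c : 'I_(size s) -> R, x = \sum_(i < size s) c i * s`_i.

Definition noetherian (R : idomainType) : Prop :=
  forall I : R -> Prop, is_ideal I -> fin_gen_ideal I.

Definition prime_ideal (R : idomainType) (P : R -> Prop) : Prop :=
  is_ideal P /\ ~ P 1 /\ (forall a b, P (a * b) -> P a \/ P b).

Definition maximal_ideal (R : idomainType) (M : R -> Prop) : Prop :=
  is_ideal M /\ ~ M 1 /\
  (forall J : R -> Prop, is_ideal J -> (forall x, M x -> J x) ->
     (forall x, J x -> M x) \/ J 1).

Definition dim_le1 (R : idomainType) : Prop :=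
  forall P : R -> Prop, prime_ideal P -> (exists x, P x /\ x <> 0) -> maximal_ideal P.

Definition integrally_closed (R : idomainType) : Prop :=
  forall (x : {fraction R}) (p : {poly R}),
    p \is monic -> root (map_poly (@tofracR R) p) x -> exists r : R, x = tofracR r.

Definition dedekind_domain (R : idomainType) : Prop :=
  noetherian R /\ integrally_closed R /\ dim_le1 R.

Definition inv_ideal (R : idomainType) (I : R -> Prop) : {fraction R} -> Prop :=
  fun x => forall i, I i -> exists r : R, x * tofracR i = tofracR r.

Definition iso_ideal_inv (R : idomainType) (I : R -> Prop) : Prop :=
  exists f : R -> {fraction R},
    (forall i, I i -> inv_ideal I (f i)) /\
    (forall i j, I i -> I j -> f (i + j) = f i + f j) /\
    (forall r i, I i -> f (r * i) = tofracR r * f i) /\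
    (forall i j, I i -> I j -> f i = f j -> i = j) /\
    (forall y, inv_ideal I y -> exists i, I i /\ f i = y).

Definition is_homRI (R : idomainType) (I : R -> Prop) (f : 'M[R]_2 -> R) : Prop :=
  (forall x, I (f x)) /\ (forall r x y, f (r *: x + y) = r * f x + f y).

Definition hom_act (R : idomainType) (a : 'M[R]_2) (f : 'M[R]_2 -> R) : 'M[R]_2 -> R :=
  fun x => f (x *m a).

Definition hom_iso_regular (R : idomainType) (I : R -> Prop) : Prop :=
  exists Psi : 'M[R]_2 -> ('M[R]_2 -> R),
    (forall a, is_homRI I (Psi a)) /\
    (forall a b x, Psi (a + b) x = Psi a x + Psi b x) /\
    (forall a b x, Psi (b *m a) x = hom_act b (Psi a) x) /\
    (forall a b, (forall x, Psi a x = Psi b x) -> a = b) /\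
    (forall f, is_homRI I f -> exists a, forall x, Psi a x = f x).

(* Main.v *)
Require Import Defs.
From HB Require Import structures.
From mathcomp Require Import all_boot all_order all_algebra.
From Stdlib Require Import Classical IndefiniteDescription.
From mathcomp Require Import ring.
Set Implicit Arguments. Unset Strict Implicit. Unset Printing Implicit Defensive.
Import GRing.Theory.
Local Open Scope ring_scope.

Section S.
Variable R : idomainType.
Implicit Types (X Y P Q I : R -> Prop).

Definition subI X Y := forall x, X x -> Y x.

Lemma ideal_sum X n (c : 'I_n -> R) : is_ideal X -> (forall i, X (c i)) -> X (\sum_i c i).
Proof. move=> [X0 [XD _]] Hc; by apply: (big_ind X). Qed.

Lemma noeth_max (HN : noetherian R) (Fam : (R -> Prop) -> Prop) X0 :
 is_ideal X0 -> Fam X0 ->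
 exists X, is_ideal X /\ Fam X /\ forall Y, is_ideal Y -> Fam Y -> subI X Y -> subI Y X.
Proof.
move=> I0 F0; apply: NNPP => Hn.
have step : forall X : {X | is_ideal X /\ Fam X}, {Y : {X | is_ideal X /\ Fam X} |
    subI (sval X) (sval Y) /\ exists y, sval Y y /\ ~ sval X y}.
  move=> [X [IX FX]]; apply: constructive_indefinite_description.
  apply: NNPP => H2; apply: Hn; exists X; split=>//; split=>// Y IY FY XY y Yy.
  apply: NNPP => nXy; apply: H2; exists (exist _ Y (conj IY FY)); split=>//; by exists y.
pose nx (Z : {X | is_ideal X /\ Fam X}) := sval (step Z).
pose x0 := exist (fun X => is_ideal X /\ Fam X) X0 (conj I0 F0).
pose s n := sval (iter n nx x0).
have sS n : subI (s n) (s n.+1) := proj1 (svalP (step (iter n nx x0))).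
have mono n k : subI (s n) (s (k + n)%N).
  elim: k => [|k IH] x Hx //; apply: sS; exact: IH.
have Is n : is_ideal (s n) := proj1 (svalP (iter n nx x0)).
pose U x := exists n, s n x.
have IU : is_ideal U.
  split; first by exists 0%N; case: (Is 0%N).
  split.
    move=> x y [n xn] [m ym]; exists (maxn n m).
    have h1 := mono n (maxn n m - n)%N; have h2 := mono m (maxn n m - m)%N.
    rewrite subnK ?leq_maxl // in h1; rewrite subnK ?leq_maxr // in h2.
    by case: (Is (maxn n m)) => _ [+ _]; apply; [apply: h1|apply: h2].
  by move=> r x [n xn]; exists n; case: (Is n) => _ [_ H]; apply: H.
have [g Hg] := HN U IU.
have gU (i : 'I_(size g)) : exists n, s n g`_i.
  apply/Hg; exists (fun j => (j == i)%:R).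
  rewrite (bigD1 i) //= eqxx mul1r big1 ?addr0 // => j /negbTE ->; by rewrite mul0r.
have /fin_all_exists [N HN'] := gU.
pose M := (\max_(i < size g) N i)%N.
have UM : subI U (s M).
  move=> x /Hg [c ->]; apply: ideal_sum (Is M) _ => i.
  case: (Is M) => _ [_ Hm]; apply: Hm.
  have := mono (N i) (M - N i)%N; rewrite subnK; first by apply; exact: HN'.
  exact: leq_bigmax.
have [_ [y [y1 y2]]] := svalP (step (iter M nx x0)).
by apply: y2; apply: UM; exists M.+1.
Qed.


Fixpoint PR (L : seq (R -> Prop)) (x : R) : Prop :=
  match L with
  | [::] => x = 1
  | Q :: L' => exists q y, Q q /\ PR L' y /\ x = q * y
  end.

Fixpoint allL (p : (R -> Prop) -> Prop) (L : seq (R -> Prop)) : Prop :=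
  match L with
  | [::] => True
  | Q :: L' => p Q /\ allL p L'
  end.

Definition np P := prime_ideal P /\ exists x, P x /\ x <> 0.
Definition cprod X L := forall x, PR L x -> X x.

Lemma PR_cat L1 L2 x : PR (L1 ++ L2) x <-> exists x1 x2, PR L1 x1 /\ PR L2 x2 /\ x = x1 * x2.
Proof.
elim: L1 x => [|Q L1 IH] x /=.
  split; first by move=> H; exists 1, x; rewrite mul1r.
  by move=> [x1 [x2 [-> [H ->]]]]; rewrite mul1r.
split.
  move=> [q [y [Qq [Hy ->]]]]; have [x1 [x2 [h1 [h2 ->]]]] := (IH y).1 Hy.
  exists (q * x1), x2; split; [by exists q, x1 | split=> //; by rewrite mulrA].
move=> [x1 [x2 [[q [y [Qq [Hy ->]]]] [H2 ->]]]].
exists q, (y * x2); split=> //; split; [apply/IH; by exists y, x2 | by rewrite mulrA].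
Qed.

Lemma allL_cat p L1 L2 : allL p (L1 ++ L2) <-> allL p L1 /\ allL p L2.
Proof. elim: L1 => [|Q L1 IH] /=; first by tauto. by rewrite IH; tauto. Qed.

Lemma allL_impl (p1 p2 p3 : (R -> Prop) -> Prop) L :
  allL p1 L -> allL p2 L -> (forall Q, p1 Q -> p2 Q -> p3 Q) -> allL p3 L.
Proof. elim: L => [|Q L IH] //= [h1 h2] [h3 h4] H; split; [exact: H | exact: IH]. Qed.

Lemma not_sub X Y : ~ subI X Y -> exists x, X x /\ ~ Y x.
Proof.
move=> h; apply: NNPP => h2; apply: h => x Xx; apply: NNPP => nY; apply: h2; by exists x.
Qed.

Lemma prime_cprod P L : prime_ideal P -> cprod P L ->
  exists L1 Q L2, L = L1 ++ Q :: L2 /\ subI Q P.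
Proof.
move=> [IP [P1 Pm]]; elim: L => [|Q L IH] H.
  by exfalso; apply: P1; apply: H.
case: (classic (subI Q P)) => [QP|nQP]; first by exists [::], Q, L.
have [q [Qq nPq]] := not_sub nQP.
have : cprod P L.
  move=> y Hy; have : P (q * y) by apply: H; exists q, y.
  by case/Pm.
move/IH => [L1 [Q' [L2 [-> H']]]]; by exists (Q :: L1), Q', L2.
Qed.

Definition addI X a := fun x => exists m r, X m /\ x = m + r * a.

Lemma addI_ideal X a : is_ideal X -> is_ideal (addI X a).
Proof.
move=> [X0 [XD XM]]; split; first by exists 0, 0; rewrite mul0r addr0.
split.
  move=> x y [m [r [Xm ->]]] [m' [r' [Xm' ->]]]; exists (m + m'), (r + r'); split; first exact: XD.
  by rewrite mulrDl !addrA; congr (_ + _); rewrite -!addrA; congr (_ + _); rewrite addrC.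
move=> s x [m [r [Xm ->]]]; exists (s * m), (s * r); split; first exact: XM.
by rewrite mulrDr mulrA.
Qed.

Lemma addI_sub X a : subI X (addI X a).
Proof. by move=> x Xx; exists x, 0; rewrite mul0r addr0. Qed.

Lemma addI_a X a : is_ideal X -> addI X a a.
Proof. by move=> [X0 _]; exists 0, 1; rewrite add0r mul1r. Qed.

Lemma ideal_has_prod (HN : noetherian R) X : is_ideal X -> (exists x, X x /\ x <> 0) ->
  exists L, allL np L /\ cprod X L.
Proof.
move=> IX nzX; apply: NNPP => H.
have [M [IM [[nzM nM] Mmax]]] := noeth_max HN
   (Fam := fun Y => (exists x, Y x /\ x <> 0) /\ ~ exists L, allL np L /\ cprod Y L) IX (conj nzX H).
have nM1 : ~ M 1.
  by move=> M1; apply: nM; exists [::]; split=> // x /= ->.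
have nprime : ~ prime_ideal M.
  move=> pM; apply: nM; exists [:: M]; split; first by split=> //; split.
  by move=> x /= [q [y [Mq [-> ->]]]]; rewrite mulr1.
have [a [b [Mab [nMa nMb]]]] : exists a b, M (a * b) /\ ~ M a /\ ~ M b.
  apply: NNPP => h; apply: nprime; split=> //; split=> // a b Mab.
  apply: NNPP => h2; apply: h; exists a, b; split=> //; split=> Ha; apply: h2; by [left|right].
have ext c : ~ M c -> exists L, allL np L /\ cprod (addI M c) L.
  move=> nMc; apply: NNPP => h.
  have : subI (addI M c) M.
    apply: Mmax; [exact: addI_ideal | | exact: addI_sub].
    split=> //; case: nzM => x [Mx nx]; exists x; split=> //; exact: addI_sub.
  by move/(_ c (addI_a c IM)).
have [L1 [np1 c1]] := ext a nMa; have [L2 [np2 c2]] := ext b nMb.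
apply: nM; exists (L1 ++ L2); split; first by apply/allL_cat.
move=> x /PR_cat [x1 [x2 [/c1 [m [r [Mm ->]]] [/c2 [m' [r' [Mm' ->]]] ->]]]].
case: IM => _ [MD MM].
have -> : (m + r * a) * (m' + r' * b) = ((m' + r' * b) * m + (r * a) * m') + (r * r') * (a * b).
  by ring.
by apply: (MD); [apply: (MD); apply: (MM)|apply: (MM)].
Qed.


Local Notation K := {fraction R}.
Local Notation F := (@tofracR R).

Lemma FM x y : F (x * y) = F x * F y. Proof. exact: rmorphM. Qed.
Lemma FD x y : F (x + y) = F x + F y. Proof. exact: rmorphD. Qed.
Lemma FN x : F (- x) = - F x. Proof. exact: rmorphN. Qed.
Lemma F0 : F 0 = 0. Proof. exact: rmorph0. Qed.
Lemma F1 : F 1 = 1. Proof. exact: rmorph1. Qed.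
Lemma F_inj x y : F x = F y -> x = y.
Proof. by move/eqP; rewrite /tofracR tofrac_eq => /eqP. Qed.
Lemma F_neq0 x : x <> 0 -> F x != 0.
Proof. by move=> h; apply/eqP => E; apply: h; apply: F_inj; rewrite E F0. Qed.

Lemma max_prime P : maximal_ideal P -> prime_ideal P.
Proof.
move=> [IP [P1 Pmax]]; split=> //; split=> // a b Pab.
case: (classic (P a)) => [|nPa]; [by left|right].
have [Psub|[m [r [Pm E]]]] := Pmax (addI P a) (addI_ideal a IP) (@addI_sub P a).
  by exfalso; apply: nPa; apply: Psub; exact: addI_a.
have -> : b = b * m + r * (a * b) by rewrite -[b in LHS]mulr1 E; ring.
by case: IP => _ [PD PM]; apply: (PD); apply: (PM).
Qed.

Lemma max_sub P Q : maximal_ideal Q -> is_ideal P -> ~ P 1 -> subI Q P -> subI P Q.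
Proof. by move=> [_ [_ Qm]] IP P1 QP; case: (Qm P IP QP). Qed.

Definition aR (a : R) := fun x : R => exists r, x = r * a.

Lemma aR_ideal a : is_ideal (aR a).
Proof.
split; first by exists 0; rewrite mul0r.
split; first by move=> x y [r ->] [s ->]; exists (r + s); rewrite mulrDl.
by move=> s x [r ->]; exists (s * r); rewrite mulrA.
Qed.

Lemma max_inv (HN : noetherian R) (Hd : dim_le1 R) P : maximal_ideal P -> (exists x, P x /\ x <> 0) ->
 exists z : K, (forall p, P p -> exists r, z * F p = F r) /\ ~ exists r, z = F r.
Proof.
move=> MP [a [Pa a0]].
have [L [npL cL]] := ideal_has_prod HN (aR_ideal a) (ex_intro _ a (conj (ex_intro _ 1 (esym (mul1r a))) a0)).
have pP := max_prime MP.
have sP : subI (aR a) P.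
  by move=> x [r ->]; case: MP => [[_ [_ PM]] _]; apply: PM.
suff: forall n L, (size L < n)%N -> allL np L -> cprod (aR a) L ->
  exists z : K, (forall p, P p -> exists r, z * F p = F r) /\ ~ exists r, z = F r.
  by move/(_ (size L).+1 L (ltnSn _) npL cL).
elim=> [|n IH] L' // hs nL cL'.
have [L1 [Q [L2 [E QP]]]] := prime_cprod pP (fun x h => sP _ (cL' x h)).
subst L'; move: nL => /allL_cat [nL1 [npQ nL2]].
have mQ : maximal_ideal Q := Hd Q npQ.1 npQ.2.
have PQ : subI P Q := max_sub mQ MP.1 MP.2.1 QP.
case: (classic (cprod (aR a) (L1 ++ L2))) => h.
  apply: (IH (L1 ++ L2)) => //; last by apply/allL_cat.
  by move: hs; rewrite !size_cat /= addnS ltnS.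
have [x [PRx nax]] := not_sub h.
exists (F x / F a); split.
  move=> p Pp.
  have [r hr] : aR a (p * x).
    apply: cL'; move/PR_cat: PRx => [x1 [x2 [h1 [h2 ->]]]].
    apply/PR_cat; exists x1, (p * x2); split=> //; split; last by ring.
    by exists p, x2; split=> //; apply: PQ.
  exists r; rewrite mulrAC -FM [x * p]mulrC hr FM mulfK //; exact: F_neq0.
move=> [r hr]; apply: nax; exists r; apply: F_inj.
by rewrite FM -hr divfK //; exact: F_neq0.
Qed.


Lemma gen_in I (g : seq R) : (forall x, I x <-> exists c : 'I_(size g) -> R, x = \sum_(i < size g) c i * g`_i) ->
  forall i : 'I_(size g), I g`_i.
Proof.
move=> Hg i; apply/Hg; exists (fun j => (j == i)%:R).
rewrite (bigD1 i) //= eqxx mul1r big1 ?addr0 // => j /negbTE ->; by rewrite mul0r.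
Qed.

Lemma stable_integral (HN : noetherian R) (Hic : integrally_closed R) I :
  is_ideal I -> (exists x, I x /\ x <> 0) -> forall z : K,
  (forall i, I i -> exists j, I j /\ z * F i = F j) -> exists r, z = F r.
Proof.
move=> II [x0 [Ix0 x00]] z Hz.
have [g Hg] := HN I II.
have gI := gen_in Hg.
have hA (k : 'I_(size g)) : exists c : {ffun 'I_(size g) -> R}, z * F g`_k = F (\sum_i c i * g`_i).
  have [j [Ij E]] := Hz _ (gI k); have [c Ec] := (Hg j).1 Ij.
  exists [ffun i => c i]; rewrite E Ec; congr (F _); apply: eq_bigr => i _; by rewrite ffunE.
have /fin_all_exists [C HC] := hA.
pose A := \matrix_(k, i) C k i : 'M[R]_(size g).
pose B := z%:M - map_mx F A : 'M[K]_(size g).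
pose v := \col_k F g`_k : 'cV[K]_(size g).
have Bv : B *m v = 0.
  apply/colP => k; rewrite mulmxBl mul_scalar_mx !mxE HC /tofracR rmorph_sum /=.
  apply/eqP; rewrite subr_eq0; apply/eqP; apply: eq_bigr => i _; by rewrite !mxE rmorphM.
have detv : \det B *: v = 0 by rewrite -mul_scalar_mx -mul_adj_mx -mulmxA Bv mulmx0.
have [k gk] : exists k : 'I_(size g), g`_k <> 0.
  apply: NNPP => h; apply: x00; have [c ->] := (Hg x0).1 Ix0.
  apply: big1 => i _; have -> : g`_i = 0 by apply: NNPP => h2; apply: h; exists i.
  by rewrite mulr0.
have dB : \det B = 0.
  move/colP/(_ k): detv; rewrite !mxE => /eqP; rewrite mulf_eq0 => /orP [/eqP //|].
  by move/eqP/F_inj.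
apply: (Hic z (char_poly A)); first exact: char_poly_monic.
rewrite /tofracR map_char_poly rootE -horner_evalE -det_map_mx.
rewrite -[X in _ == X]dB; apply/eqP; congr (\det _).
rewrite /B raddfB/= map_scalar_mx; apply/matrixP=> i j.
by rewrite !mxE /= !horner_evalE hornerX hornerC.
Qed.


Lemma iso_c I : is_ideal I -> (exists x, I x /\ x <> 0) -> iso_ideal_inv I ->
  exists c : K, c != 0 /\ (forall y, inv_ideal I y <-> exists i, I i /\ y = c * F i).
Proof.
move=> [I0 _] [i0 [Ii0 i00]] [f [finv [fadd [fmul [finj fsurj]]]]].
have Fi0 := F_neq0 i00.
have f0 : f 0 = 0.
  by have := fadd 0 0 I0 I0; rewrite addr0 => /esym/eqP; rewrite -subr_eq0 addrK => /eqP.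
have fc i : I i -> f i = f i0 / F i0 * F i.
  move=> Ii; have := fmul i0 i Ii; rewrite mulrC fmul // => E.
  by rewrite mulrAC [f i0 * _]mulrC E [F i0 * _]mulrC mulfK.
exists (f i0 / F i0); split.
  rewrite mulf_eq0 invr_eq0 (negbTE Fi0) orbF; apply/eqP => h.
  by apply: i00; apply: finj => //; rewrite h f0.
move=> y; split.
  by move/fsurj => [i [Ii <-]]; exists i; split=> //; exact: fc.
by move=> [i [Ii ->]]; rewrite -fc //; exact: finv.
Qed.

Lemma dual I : is_ideal I -> (exists x, I x /\ x <> 0) -> iso_ideal_inv I ->
  forall w : K, (forall y, inv_ideal I y -> exists r, w * y = F r) -> exists i, I i /\ w = F i.
Proof.
move=> II nzI iso w Hw.
have [c [c0 Hc]] := iso_c II nzI iso.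
have : inv_ideal I (w * c).
  move=> j Ij; rewrite -mulrA; apply: Hw; apply/Hc; by exists j.
move/Hc => [i [Ii E]]; exists i; split=> //.
by apply: (mulIf c0); rewrite E mulrC.
Qed.

Lemma loc_inv (HN : noetherian R) (Hic : integrally_closed R) (Hd : dim_le1 R) I :
  is_ideal I -> (exists x, I x /\ x <> 0) -> iso_ideal_inv I ->
  forall Q, maximal_ideal Q -> (exists x, Q x /\ x <> 0) ->
  exists i y r, I i /\ inv_ideal I y /\ y * F i = F r /\ ~ Q r.
Proof.
move=> II nzI iso Q mQ nzQ; apply: NNPP => H.
have [z [zQ nz]] := max_inv HN Hd mQ nzQ.
apply: nz; apply: (stable_integral HN Hic II nzI) => i Ii.
apply: (dual II nzI iso) => y iy.
have [r hr] := iy i Ii.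
have Qr : Q r.
  apply: NNPP => nQr; apply: H; by exists i, y, r.
have [r' hr'] := zQ r Qr.
by exists r'; rewrite -mulrA [F i * y]mulrC hr.
Qed.


Lemma ideal_subr X x y : is_ideal X -> X (x + y) -> X y -> X x.
Proof.
move=> [_ [XD XM]] h1 h2; have -> : x = (x + y) + (-1) * y by ring.
by apply: XD => //; apply: XM.
Qed.

Lemma sep_lemma Q L (E : (R -> Prop) -> Prop) : maximal_ideal Q ->
  allL (fun Q' => maximal_ideal Q' /\ E Q') L -> (forall Q', E Q' -> subI Q Q' -> E Q) ->
  E Q \/ exists t, ~ Q t /\ allL (fun Q' => Q' t) L.
Proof.
move=> mQ; elim: L => [|Q' L IH] /=.
  by move=> _ _; right; exists 1; split; [exact: mQ.2.1|].
move=> [[mQ' EQ'] hL] Hmono; case: (IH hL Hmono) => [hE|[t [nQt Lt]]]; first by left.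
case: (classic (subI Q' Q)) => h.
  by left; apply: Hmono EQ' _; exact: max_sub mQ' mQ.1 mQ.2.1 h.
have [p [Q'p nQp]] := not_sub h; right; exists (p * t); split.
  by case/max_prime: mQ => _ [_ Pm] /Pm [].
split; first by rewrite mulrC; apply: mQ'.1.2.2.
by apply: (allL_impl hL Lt) => Q'' [m _] hh; apply: m.1.2.2.
Qed.

Definition Esc I b Q := exists y r, inv_ideal I y /\ y * F b = F r /\ ~ Q r.

Lemma avoid (HN : noetherian R) (Hic : integrally_closed R) (Hd : dim_le1 R) I :
  is_ideal I -> (exists x, I x /\ x <> 0) -> iso_ideal_inv I ->
  forall L, allL (fun Q => maximal_ideal Q /\ exists x, Q x /\ x <> 0) L ->
  exists b, I b /\ allL (Esc I b) L.
Proof.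
move=> II nzI iso; elim=> [|Q L IH] /=; first by exists 0; split=> //; case: II.
move=> [[mQ nzQ] hL]; have [b [Ib Lb]] := IH hL.
case: (classic (Esc I b Q)) => hQ; first by exists b.
have hL' : allL (fun Q' => maximal_ideal Q' /\ Esc I b Q') L.
  by apply: (allL_impl hL Lb) => Q' [m _] e.
have mono : forall Q', Esc I b Q' -> subI Q Q' -> Esc I b Q.
  move=> Q' [y [r [iy [E nr]]]] QQ'; exists y, r; split=> //; split=> // Qr; apply: nr; exact: QQ'.
have [//|[t [nQt Lt]]] := sep_lemma mQ hL' mono.
have [i0 [y0 [r0 [Ii0 [iy0 [E0 nQr0]]]]]] := loc_inv HN Hic Hd II nzI iso mQ nzQ.
exists (b + t * i0); split.
  by case: II => _ [ID IM]; apply: ID => //; apply: IM.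
split.
  have [r1 h1] := iy0 b Ib.
  have Qr1 : Q r1 by apply: NNPP => nr1; apply: hQ; exists y0, r1.
  exists y0, (r1 + t * r0); split=> //; split.
    by rewrite FD FM mulrDr h1 mulrCA E0 -FM -FD.
  move=> h; have : Q (t * r0) by apply: (ideal_subr mQ.1 (y := r1)); [rewrite addrC|].
  by case/max_prime: mQ => _ [_ Pm] /Pm [].
apply: (allL_impl hL' Lt) => Q'' [m [y [r [iy [h nr]]]]] Qt.
have [r2 h2] := iy i0 Ii0.
exists y, (r + t * r2); split=> //; split.
  by rewrite FD FM mulrDr h mulrCA h2 -FM -FD.
move=> hh; apply: nr; apply: (ideal_subr m.1 hh).
by rewrite mulrC; apply: m.1.2.2.
Qed.

Lemma inv0 I : inv_ideal I 0.
Proof. by move=> i _; exists 0; rewrite mul0r F0. Qed.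
Lemma inv1 I : inv_ideal I 1.
Proof. by move=> i _; exists i; rewrite mul1r. Qed.
Lemma invD I y z : inv_ideal I y -> inv_ideal I z -> inv_ideal I (y + z).
Proof.
by move=> hy hz i Ii; have [r hr] := hy i Ii; have [s hs] := hz i Ii; exists (r + s); rewrite mulrDl hr hs FD.
Qed.
Lemma invM I s y : inv_ideal I y -> inv_ideal I (F s * y).
Proof. by move=> hy i Ii; have [r hr] := hy i Ii; exists (s * r); rewrite -mulrA hr FM. Qed.

Lemma two_gen (HN : noetherian R) (Hic : integrally_closed R) (Hd : dim_le1 R) I :
  is_ideal I -> (exists x, I x /\ x <> 0) -> iso_ideal_inv I ->
  exists a b y z, I a /\ I b /\ inv_ideal I y /\ inv_ideal I z /\ y * F a + z * F b = 1.
Proof.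
move=> II nzI iso; have [a [Ia a0]] := nzI.
have [L [npL cL]] := ideal_has_prod HN (aR_ideal a) (ex_intro _ a (conj (ex_intro _ 1 (esym (mul1r a))) a0)).
have mL : allL (fun Q => maximal_ideal Q /\ exists x, Q x /\ x <> 0) L.
  by apply: (allL_impl npL npL) => Q [pQ nz] _; split=> //; exact: Hd.
have [b [Ib Lb]] := avoid HN Hic Hd II nzI iso mL.
apply: NNPP => H.
pose Kd x := exists y z, inv_ideal I y /\ inv_ideal I z /\ F x = y * F a + z * F b.
have IK : is_ideal Kd.
  split; first by exists 0, 0; split; [exact: inv0|split; [exact: inv0|]]; rewrite F0 !mul0r addr0.
  split.
    move=> x x' [y [z [iy [iz ex]]]] [y' [z' [iy' [iz' ex']]]].
    exists (y + y'), (z + z'); split; first exact: invD.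
    by split; [exact: invD|]; rewrite FD ex ex' !mulrDl; ring.
  move=> s x [y [z [iy [iz ex]]]]; exists (F s * y), (F s * z).
  by split; [exact: invM|split; [exact: invM|]]; rewrite FM ex; ring.
have nK1 : ~ Kd 1.
  move=> [y [z [iy [iz ex1]]]]; apply: H; exists a, b, y, z; split=> //; split=> //; split=> //; split=> //.
have [M [IM [[KM nM1] Mmax]]] := noeth_max HN (Fam := fun X => subI Kd X /\ ~ X 1) IK (conj (fun x h => h) nK1).
have mM : maximal_ideal M.
  split=> //; split=> // J IJ MJ; case: (classic (J 1)) => hJ; [by right|left].
  by apply: Mmax => //; split=> // x /KM /MJ.
have cM : cprod M L.
  move=> x /cL [r ->]; apply: IM.2.2; apply: KM; exists 1, 0; split; [exact: inv1|split; [exact: inv0|]].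
  by rewrite mul1r mul0r addr0.
have [L1 [Q [L2 [E QM]]]] := prime_cprod (max_prime mM) cM.
subst L; move/allL_cat: mL => [_ [[mQ _] _]]; move/allL_cat: Lb => [_ [[y [r [iy [hy nr]]]] _]].
apply: nr; apply: (max_sub mQ IM nM1 QM); apply: KM.
by exists 0, y; split; [exact: inv0|split=> //]; rewrite mul0r add0r hy.
Qed.


Lemma mapF_inj m n (A B : 'M[R]_(m, n)) : map_mx F A = map_mx F B -> A = B.
Proof. by move=> h; apply/matrixP => i j; move/matrixP/(_ i j): h; rewrite !mxE => /F_inj. Qed.

Lemma ord2 (i : 'I_2) : i = 0 \/ i = 1.
Proof. by case: i => [[|[|//]]] Hi; [left|right]; apply/val_inj. Qed.

Lemma sum2 (V : nmodType) (h : 'I_2 -> V) : \sum_i h i = h 0 + h 1.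
Proof. by rewrite big_ord_recr big_ord1; congr (h _ + h _); apply/val_inj. Qed.

End S.

Theorem proposition2p2 (R : idomainType) (I : R -> Prop) :
  dedekind_domain R -> is_ideal I -> ~ principal_ideal I -> iso_ideal_inv I ->
  hom_iso_regular I.
Proof.
move=> [HN [Hic Hd]] II nP iso.
have nzI : exists x, I x /\ x <> 0.
  apply: NNPP => h; apply: nP; exists 0 => x; split.
    move=> Ix; exists 0; rewrite mulr0; apply: NNPP => nx; apply: h; by exists x.
  by move=> [r ->]; rewrite mulr0; exact: II.1.
have [c [c0 Hc]] := iso_c II nzI iso.
have [a [b [y [z [Ia [Ib [iy [iz E]]]]]]]] := two_gen HN Hic Hd II nzI iso.
have [i1 [Ii1 Ey]] := (Hc y).1 iy; have [i2 [Ii2 Ez]] := (Hc z).1 iz.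
subst y z.
pose M : 'M[R]_2 := \matrix_(i, j) (if i == 0 then (if j == 0 then a else b)
                                     else (if j == 0 then - i2 else i1)).
pose N : 'M[{fraction R}]_2 := \matrix_(i, j) (if i == 0 then (if j == 0 then c * tofracR i1 else - (c * tofracR b))
                                     else (if j == 0 then c * tofracR i2 else c * tofracR a)).
have MN : map_mx (@tofracR R) M *m N = 1%:M.
  apply/matrixP => i j; rewrite !mxE sum2 !mxE.
  case: (ord2 i) => ->; case: (ord2 j) => -> /=; rewrite ?FN -E; ring.
have NM : N *m map_mx (@tofracR R) M = 1%:M := mulmx1C MN.
have MI : forall i j, I (M i j).
  move=> i j; rewrite !mxE; case: (ord2 i) => ->; case: (ord2 j) => -> //=.
  by rewrite -mulN1r; apply: II.2.2.
have NI : forall i j, inv_ideal I (N i j).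
  move=> i j; apply/Hc; rewrite !mxE; case: (ord2 i) => ->; case: (ord2 j) => -> /=.
  - by exists i1.
  - exists (- b); split; last by rewrite FN mulrN.
    by rewrite -mulN1r; apply: II.2.2.
  - by exists i2.
  - by exists a.
exists (fun A x => \tr (x *m A *m M)).
split.
  move=> A; split.
    move=> x; rewrite /mxtrace; apply: ideal_sum (II) _ => k; rewrite mxE.
    by apply: ideal_sum (II) _ => l; apply: II.2.2.
  by move=> r x x'; rewrite !mulmxDl -!scalemxAl mxtraceD mxtraceZ.
split; first by move=> A B x; rewrite mulmxDr mulmxDl mxtraceD.
split; first by move=> A B x; rewrite /hom_act !mulmxA.
split.
  move=> A B H.
  have D0 : (A - B) *m M = 0.
    apply/matrixP => i j; have := H (delta_mx j i).
    rewrite /mxtrace !sum2 !mxE !sum2 !mxE !sum2 !mxE.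
    case: (ord2 i) => ->; case: (ord2 j) => -> /=; rewrite ?mul1r ?mul0r ?addr0 ?add0r => h; move/eqP: h; rewrite -subr_eq0 => /eqP h; rewrite -[RHS]h; ring.
  apply/eqP; rewrite -subr_eq0; apply/eqP; apply: mapF_inj.
  by rewrite map_mx0 -[map_mx _ _]mulmx1 -MN mulmxA -map_mxM D0 map_mx0 mul0mx.
move=> f [fI flin].
have fadd x x' : f (x + x') = f x + f x'.
  by have := flin 1 x x'; rewrite scale1r mul1r.
have f0 : f 0 = 0.
  by have := fadd 0 0; rewrite addr0 => /esym/eqP; rewrite -subr_eq0 addrK => /eqP.
have fZ r x : f (r *: x) = r * f x.
  by have := flin r x 0; rewrite addr0 f0 addr0.
pose G : 'M[R]_2 := \matrix_(i, j) f (delta_mx j i).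
have fx x : f x = \tr (x *m G).
  rewrite {1}(matrix_sum_delta x) (big_morph f fadd f0) /mxtrace.
  apply: eq_bigr => i _; rewrite (big_morph f fadd f0) mxE.
  by apply: eq_bigr => k _; rewrite fZ mxE.
have hA (ij : 'I_2 * 'I_2) : exists r, (map_mx (@tofracR R) G *m N) ij.1 ij.2 = tofracR r.
  idtac.
  have [r1 h1] := NI 0 ij.2 _ (fI (delta_mx 0 ij.1)).
  have [r2 h2] := NI 1 ij.2 _ (fI (delta_mx 1 ij.1)).
  by exists (r1 + r2); rewrite FD -h1 -h2 !mxE sum2 !mxE; ring.
have /fin_all_exists [g Hg] := hA.
pose A : 'M[R]_2 := \matrix_(i, j) g (i, j).
have AM : A *m M = G.
  apply: mapF_inj; rewrite map_mxM.
  have -> : map_mx (@tofracR R) A = map_mx (@tofracR R) G *m N.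
    by apply/matrixP => i j; rewrite [LHS]mxE [A i j]mxE -(Hg (i, j)).
  by rewrite -mulmxA NM mulmx1.
by exists A => x; rewrite -mulmxA AM fx.
Qed.
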